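(* Let $\mathcal{H}$ be a separable Hilbert space with inner product $\langle\cdot,\cdot\rangle$ (linear in the second argument), and let $\mathcal{F}_\varphi=\{\varphi_n\}_{n\ge0}$ be a (Schauder) basis of $\mathcal{H}$ with biorthogonal basis $\mathcal{F}_\psi=\{\psi_n\}_{n\ge0}$, $\langle\varphi_n,\psi_k\rangle=\delta_{n,k}$, with $\varphi_n,\psi_n\in\mathcal{D}$ for a dense subspace $\mathcal{D}$. Let $H$ be an operator with $D(H),D(H^\dagger)\supseteq\mathcal{D}$, let $\{\Phi_n\}_{n\ge0}$ satisfy $H\Phi_n=E_n\Phi_n$ and $\{\eta_n\}_{n\ge0}$ satisfy $H^\dagger\eta_n=\overline{E_n}\eta_n$, and put $c_k^{(n)}=\langle\psi_k,\Phi_n\rangle$ (so $\Phi_n=\sum_k c_k^{(n)}\varphi_k$) and $d_k^{(n)}=\langle\varphi_k,\eta_n\rangle$ (so $\eta_n=\sum_k d_k^{(n)}\psi_k$). Then (i) $\sum_k\overline{c_k^{(n)}}\,d_k^{(m)}=\langle\Phi_n,\eta_m\rangle$ for all $n,m$, and this equals $\delta_{n,m}$ if each eigenvalue of $H$ has multiplicity one (the $E_n$ are pairwise distinct) and the normalizations are chosen so that $\langle\Phi_n,\eta_n\rangle=1$ for all $n$; (ii) if $\{\Phi_n\}$ and $\{\eta_n\}$ are $\mathcal{D}$-quasi bases, then $\sum_n\overline{c_k^{(n)}}\,d_l^{(n)}=\delta_{k,l}$ for all $k,l\ge0$.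
   Context: Two families $\{f_n\}$, $\{g_n\}$ are called $\mathcal{D}$-quasi bases if for all $f,g\in\mathcal{D}$: $\langle f,g\rangle=\sum_{n\ge0}\langle f,f_n\rangle\langle g_n,g\rangle=\sum_{n\ge0}\langle f,g_n\rangle\langle f_n,g\rangle$. *)

(* Defs.v *)
From mathcomp Require Import all_boot all_order all_algebra.
From mathcomp Require Import all_classical all_reals all_analysis.
From mathcomp Require Export complex.
Set Implicit Arguments. Unset Strict Implicit. Unset Printing Implicit Defensive.
Import Order.TTheory GRing.Theory Num.Theory.
Import numFieldTopology.Exports numFieldNormedType.Exports.
Local Open Scope classical_set_scope.
Local Open Scope ring_scope.

Section Hilbert.
Variables (R : realType) (V : lmodType R[i]) (ip : V -> V -> R[i]).

Definition is_inner_product : Prop :=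
  [/\ forall f g h, ip f (g + h) = ip f g + ip f h,
      forall (a : R[i]) f g, ip f (a *: g) = a * ip f g,
      forall f g, ip g f = (ip f g)^*,
      forall f, 0 <= ip f f
    & forall f, ip f f = 0 -> f = 0].

Definition hnorm (f : V) : R := Num.sqrt (complex.Re (ip f f)).

Definition vcvg_to (s : nat -> V) (f : V) : Prop :=
  (fun N => hnorm (s N - f)) @ \oo --> (0 : R).

Definition vseries_to (u : nat -> V) (f : V) : Prop :=
  vcvg_to (fun N => \sum_(k < N) u k) f.

Definition hcauchy (s : nat -> V) : Prop :=
  forall e : R, 0 < e -> exists N, forall m n, (N <= m)%N -> (N <= n)%N ->
    hnorm (s m - s n) < e.

Definition hcomplete : Prop :=
  forall s : nat -> V, hcauchy s -> exists f, vcvg_to s f.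

Definition hseparable : Prop :=
  exists d : nat -> V, forall f (e : R), 0 < e -> exists n, hnorm (f - d n) < e.

Definition is_separable_hilbert : Prop :=
  [/\ is_inner_product, hcomplete & hseparable].

Definition is_subspace (D : set V) : Prop :=
  [/\ D 0, forall f g, D f -> D g -> D (f + g)
    & forall (a : R[i]) f, D f -> D (a *: f)].

Definition is_dense (D : set V) : Prop :=
  forall f (e : R), 0 < e -> exists g, D g /\ hnorm (f - g) < e.

Definition schauder_basis (phi : nat -> V) : Prop :=
  forall f, exists! a : nat -> R[i], vseries_to (fun k => a k *: phi k) f.

Definition linear_operator (DH : set V) (H : V -> V) : Prop :=
  is_subspace DH /\
  (forall f g, DH f -> DH g -> H (f + g) = H f + H g) /\
  (forall (a : R[i]) f, DH f -> H (a *: f) = a *: H f).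

(* g belongs to D(H^dagger) and H^dagger g = h  (H densely defined):
   <H f, g> = <f, h> for all f in D(H) *)
Definition adjoint_rel (DH : set V) (H : V -> V) (g h : V) : Prop :=
  forall f, DH f -> ip (H f) g = ip f h.

End Hilbert.

Definition cseries_to (R : realType) (u : nat -> R[i]) (z : R[i]) : Prop :=
  (fun N : nat => (\sum_(k < N) u k : R[i]^o)) @ \oo --> (z : R[i]^o).

Definition quasi_bases (R : realType) (V : lmodType R[i]) (ip : V -> V -> R[i])
  (D : set V) (fn gn : nat -> V) : Prop :=
  forall f g, D f -> D g ->
    cseries_to (fun n => ip f (fn n) * ip (gn n) g) (ip f g) /\
    cseries_to (fun n => ip f (gn n) * ip (fn n) g) (ip f g).

(* Main.v *)
Require Import Defs.
From mathcomp Require Import all_boot all_order all_algebra.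
From mathcomp Require Import all_classical all_reals all_analysis.
From mathcomp Require Import complex.
From mathcomp Require Import ring lra.
Import Order.TTheory GRing.Theory Num.Theory.
Local Open Scope classical_set_scope.
Local Open Scope ring_scope.

Section H.
Variables (R : realType) (V : lmodType R[i]) (ip : V -> V -> R[i]).
Hypothesis ipP : is_inner_product ip.

Lemma ipD2 f g h : ip f (g + h) = ip f g + ip f h.
Proof. by case: ipP. Qed.
Lemma ipZ2 a f g : ip f (a *: g) = a * ip f g.
Proof. by case: ipP. Qed.
Lemma ipC f g : ip g f = (ip f g)^*.
Proof. by case: ipP. Qed.
Lemma ipge0 f : 0 <= ip f f.
Proof. by case: ipP. Qed.
Lemma ipD1 f g h : ip (f + g) h = ip f h + ip g h.
Proof. by rewrite ipC ipD2 rmorphD /= -!ipC. Qed.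
Lemma ipZ1 a f g : ip (a *: f) g = a^* * ip f g.
Proof. by rewrite ipC ipZ2 rmorphM /= -ipC. Qed.
Lemma ip02 f : ip f 0 = 0.
Proof. by have := ipZ2 0 f 0; rewrite scale0r mul0r. Qed.
Lemma ipN2 f g : ip f (- g) = - ip f g.
Proof. by rewrite -scaleN1r ipZ2 mulN1r. Qed.
Lemma ipB2 f g h : ip f (g - h) = ip f g - ip f h.
Proof. by rewrite ipD2 ipN2. Qed.
Lemma ipB1 f g h : ip (f - g) h = ip f h - ip g h.
Proof. by rewrite ipC ipB2 rmorphB /= -!ipC. Qed.
Lemma ip_sum2 f N (u : nat -> V) :
  ip f (\sum_(k < N) u k) = \sum_(k < N) ip f (u k).
Proof.
elim: N => [|N IH]; first by rewrite !big_ord0 ip02.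
by rewrite !big_ord_recr /= ipD2 IH.
Qed.
Lemma ip_sum1 f N (u : nat -> V) :
  ip (\sum_(k < N) u k) f = \sum_(k < N) ip (u k) f.
Proof.
rewrite ipC ip_sum2 rmorph_sum /=; apply: eq_bigr => k _; by rewrite -ipC.
Qed.

Lemma ip_bound w g : ip w g * (ip w g)^* <= (ip g g + 1) * ip w w.
Proof.
set G := ip g g; set W := ip w w; set c := ip g w.
have Gr : G^* = G by rewrite /G -ipC.
have G0 : 0 <= G := ipge0 g.
have G1 : 0 < G + 1 by apply: (lt_le_trans ltr01); rewrite lerDr.
have G1n : G + 1 != 0 by rewrite gt_eqF.
set s := (G + 1)^-1.
have sr : s^* = s by rewrite /s fmorphV rmorphD rmorph1 /= Gr.
set a := c * s.
have ar : a^* = c^* * s by rewrite /a rmorphM /= sr.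
have X0 := ipge0 (w - a *: g).
rewrite !ipB1 !ipB2 !ipZ1 !ipZ2 ar -/G -/W -/c (ipC g w) -/c in X0.
have P0 : 0 <= c * c^* := mul_conjC_ge0 c.
have E : (G + 1) ^+ 2 * (W - a * c^* - (c^* * s * c - c^* * s * (a * G)))
       = (G + 1) ^+ 2 * W - (G + 2) * (c * c^*).
  rewrite /a /s; field; exact: G1n.
have H1 : 0 <= (G + 1) ^+ 2 * W - (G + 2) * (c * c^*).
  by rewrite -E mulr_ge0 // exprn_ge0 // ltW.
rewrite subr_ge0 in H1.
have H2 : (G + 1) * (c * c^*) <= (G + 2) * (c * c^*).
  by rewrite ler_wpM2r // lerD2l ler1n.
have H3 : (G + 1) * (c * c^*) <= (G + 1) * ((G + 1) * W).
  by rewrite [X in _ <= X]mulrA -expr2; exact: le_trans H2 H1.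
rewrite ler_pM2l // in H3.
by rewrite (ipC g w) conjCK mulrC.
Qed.

Lemma cRe_ge0 {x : R[i]} : 0 <= x -> x = (complex.Re x)%:C%C /\ 0 <= complex.Re x.
Proof.
move=> x0; have xr := RRe_real (ger0_real x0).
by split => //; rewrite -ler0c xr.
Qed.

Lemma ip_small g (eps : R[i]) : 0 < eps ->
  exists2 e : R, 0 < e & forall w, hnorm ip w < e ->
    `|ip w g| < eps /\ `|ip g w| < eps.
Proof.
move=> eps0.
have [hG RG0] := cRe_ge0 (ipge0 g).
set RG := complex.Re (ip g g) in hG RG0.
have [he re0] := cRe_ge0 (ltW eps0).
set re := complex.Re eps in he re0.
have re0' : 0 < re by rewrite -ltcR -he.
exists (re / (RG + 1)).
  by rewrite divr_gt0 // ltr_wpDl.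
move=> w hw.
suff h : `|ip w g| < eps by split => //; rewrite (ipC w g) norm_conjC.
have [hW RW0] := cRe_ge0 (ipge0 w).
set RW := complex.Re (ip w w) in hW RW0.
have [hn n0] := cRe_ge0 (normr_ge0 (ip w g)).
set n := complex.Re `|ip w g| in hn n0.
have hb : n ^+ 2 <= (RG + 1) * RW.
  rewrite -lecR rmorphXn rmorphM rmorphD rmorph1 /= -hn -hG -hW normCK.
  exact: ip_bound.
move: hw; rewrite /hnorm -/RW => hw.
set q := Num.sqrt RW in hw.
have q0 : 0 <= q := sqrtr_ge0 _.
have q2 : q ^+ 2 = RW by rewrite sqr_sqrtr.
set e := re / (RG + 1) in hw.
have ee : e * (RG + 1) = re by rewrite /e mulfVK // gt_eqF // ltr_wpDl.
have e0 : 0 < e by rewrite /e divr_gt0 // ltr_wpDl.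
have h1 : RW < e ^+ 2 by rewrite -q2; rewrite ltr_pXn2r //; apply: ltW.
have h2 : (RG + 1) * RW < (RG + 1) * e ^+ 2 by rewrite ltr_pM2l // ltr_wpDl.
have h3 : (RG + 1) * e ^+ 2 <= re ^+ 2.
  rewrite -ee; nra.
have h4 : n ^+ 2 < re ^+ 2 by apply: le_lt_trans hb (lt_le_trans h2 h3).
rewrite hn he ltcR.
by rewrite -(ltr_pXn2r (n:=2)) // ltW.
Qed.

Lemma hnorm_ge0 w : 0 <= hnorm ip w.
Proof. exact: sqrtr_ge0. Qed.

Lemma ip_cvg_l s f g : vcvg_to ip s f ->
  ((fun N => ip (s N) g : R[i]^o) @ \oo --> (ip f g : R[i]^o)).
Proof.
move=> hs; apply/cvgrPdist_lt => eps eps0.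
have [e e0 He] := ip_small g eps eps0.
move/cvgrPdist_lt : hs => /(_ e e0).
apply: filterS => N.
rewrite sub0r normrN ger0_norm ?hnorm_ge0 // => /He [h1 _].
by rewrite distrC -ipB1.
Qed.

Lemma ip_cvg_r s f g : vcvg_to ip s f ->
  ((fun N => ip g (s N) : R[i]^o) @ \oo --> (ip g f : R[i]^o)).
Proof.
move=> hs; apply/cvgrPdist_lt => eps eps0.
have [e e0 He] := ip_small g eps eps0.
move/cvgrPdist_lt : hs => /(_ e e0).
apply: filterS => N.
rewrite sub0r normrN ger0_norm ?hnorm_ge0 // => /He [_ h2].
by rewrite distrC -ipB2.
Qed.

Lemma coef_id (phi psi : nat -> V) :
  (forall n k, ip (phi n) (psi k) = (n == k)%:R) ->
  forall f a, vseries_to ip (fun k => a k *: phi k) f ->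
  forall j, ip (psi j) f = a j.
Proof.
move=> bio f a hs j.
have hc := ip_cvg_r _ _ (psi j) hs.
have ev : forall N, (j < N)%N ->
    ip (psi j) (\sum_(k < N) a k *: phi k) = a j.
  move=> N jN; rewrite (ip_sum2 _ _ (fun k => a k *: phi k)) (bigD1 (Ordinal jN)) //= big1 ?addr0.
    by rewrite ipZ2 (ipC (phi j)) bio eqxx conjC_nat mulr1.
  move=> i /negbTE hi; rewrite ipZ2 (ipC (phi i)) bio.
  have -> : (nat_of_ord i == j) = false by exact: hi.
  by rewrite conjC_nat mulr0.
apply/eqP; apply/negPn/negP => ne.
have eps0 : 0 < `|ip (psi j) f - a j| by rewrite normr_gt0 subr_eq0.
move/cvgrPdist_lt : hc => /(_ _ eps0) H.
have [N [h1 h2]] := filter_ex (filterI H (nbhs_infty_gt j)).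
move: h1; rewrite ev //; by rewrite ltxx.
Qed.
End H.

Theorem proposition4 (R : realType) (V : lmodType R[i]) (ip : V -> V -> R[i])
  (D : set V) (phi psi : nat -> V) (DH : set V) (H : V -> V)
  (E : nat -> R[i]) (Phi eta : nat -> V) :
  is_separable_hilbert ip ->
  is_subspace D -> is_dense ip D ->
  schauder_basis ip phi -> schauder_basis ip psi ->
  (forall n k, ip (phi n) (psi k) = (n == k)%:R) ->
  (forall n, D (phi n) /\ D (psi n)) ->
  linear_operator DH H ->
  D `<=` DH ->
  (forall g, D g -> exists h, adjoint_rel ip DH H g h) ->
  (forall n, Phi n != 0 /\ DH (Phi n) /\ H (Phi n) = E n *: Phi n) ->
  (forall n, eta n != 0 /\ adjoint_rel ip DH H (eta n) ((E n)^* *: eta n)) ->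
  (* (i) *)
  (forall n m,
     cseries_to (fun k => (ip (psi k) (Phi n))^* * ip (phi k) (eta m))
                (ip (Phi n) (eta m))) /\
  ((forall n m, n <> m -> E n <> E m) ->
   (forall n, ip (Phi n) (eta n) = 1) ->
   forall n m, ip (Phi n) (eta m) = (n == m)%:R) /\
  (* (ii) *)
  (quasi_bases ip D Phi eta ->
   forall k l,
     cseries_to (fun n => (ip (psi k) (Phi n))^* * ip (phi l) (eta n))
                (k == l)%:R).
Proof.
move=> [ipP _ _] _ _ hphi _ bio hD _ _ _ hPhi heta.
split; [|split].
- move=> n m.
  have [a [ha _]] := hphi (Phi n).
  have coef := @coef_id _ _ _ ipP _ _ bio _ _ ha.
  have EE : forall N, \sum_(k < N) (ip (psi k) (Phi n))^* * ip (phi k) (eta m)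
      = ip (\sum_(k < N) a k *: phi k) (eta m).
    move=> N; rewrite (@ip_sum1 _ _ _ ipP _ _ (fun k => a k *: phi k)).
    by apply: eq_bigr => k _; rewrite coef (@ipZ1 _ _ _ ipP).
  rewrite /cseries_to (funext EE).
  exact: (@ip_cvg_l _ _ _ ipP _ _ _ ha).
- move=> Edist Hn n m.
  case: (eqVneq n m) => [<-|nm]; first by rewrite Hn.
  have [_ [DPhi HPhi]] := hPhi n.
  have [_ adj] := heta m.
  have := adj (Phi n) DPhi.
  rewrite HPhi (@ipZ1 _ _ _ ipP) (@ipZ2 _ _ _ ipP) => h.
  have : ((E n)^* - (E m)^*) * ip (Phi n) (eta m) = 0 by rewrite mulrBl h subrr.
  move/eqP; rewrite mulf_eq0 => /orP [|/eqP -> //].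
  rewrite subr_eq0 => /eqP /(congr1 Num.conj); rewrite !conjCK => enm.
  by exfalso; apply: (Edist n m) => //; apply/eqP.
- move=> hq k l.
  have [_ h2] := hq (phi l) (psi k) (hD l).1 (hD k).2.
  rewrite bio eq_sym in h2.
  have EE : forall n, (ip (psi k) (Phi n))^* * ip (phi l) (eta n)
     = ip (phi l) (eta n) * ip (Phi n) (psi k).
    by move=> n; rewrite (@ipC _ _ _ ipP (Phi n)) conjCK mulrC.
  by rewrite (funext EE).
Qed.
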